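(* Let $K$ be a number field and let ${\cal Z}_P\subset K^n$ be a finite set of points. Then the radical ideal of $K[x_1,\dots,x_n]$ associated with ${\cal Z}_P$ (the ideal of all polynomials vanishing on ${\cal Z}_P$) is generated by a set of polynomials of the form $$ \hat a_{i_1}\hat a_{i_2}\cdots\hat a_{i_s},\qquad (i_1,\dots,i_s)\in\Gamma_s,\quad s\in\{1,\dots,\bar n\}, $$ for some integer $\bar n>n$, some affine-linear polynomials $\hat a_1,\dots,\hat a_{\bar n}\in K[x_1,\dots,x_n]$ and some sets $\Gamma_s\subseteq\{(i_1,\dots,i_s)\in\{1,\dots,\bar n\}^s: i_1<i_2<\dots<i_s\}$.
   Context: An affine-linear polynomial is one of the form $a_{n+1}+\sum_{i=1}^n a_ix_i$ with coefficients in $K$. *)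

(* Defs.v *)
From HB Require Import structures.
From mathcomp Require Import all_boot all_order all_algebra all_field.
From mathcomp Require Import mpoly.
Set Implicit Arguments. Unset Strict Implicit. Unset Printing Implicit Defensive.
Import GRing.Theory.
Local Open Scope ring_scope.

(* A number field is a finite-dimensional field extension of Q:
   K : fieldExtType rat.  Points of K^n are functions 'I_n -> K, and
   polynomials of K[x_1,...,x_n] are elements of {mpoly K[n]}. *)

Definition affine_linear (K : fieldType) (n : nat) (p : {mpoly K[n]}) : Prop :=
  exists (c0 : K) (c : 'I_n -> K), p = c0%:MP + \sum_(i < n) c i *: 'X_i.

Definition vanishes_on (K : fieldType) (n : nat) (Z : seq ('I_n -> K))
  (p : {mpoly K[n]}) : Prop :=
  all (fun z => p.@[z] == 0) Z.

Definition in_ideal_gen (K : fieldType) (n : nat) (G : seq {mpoly K[n]})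
  (p : {mpoly K[n]}) : Prop :=
  exists c : seq {mpoly K[n]}, p = \sum_(j < size G) c`_j * G`_j.

Definition incr_tuple (m s : nat) (t : seq 'I_m) : bool :=
  (size t == s) && sorted (fun i j : 'I_m => (i < j)%N) t.

Definition prod_gens (K : fieldType) (n nbar : nat) (a : 'I_nbar -> {mpoly K[n]})
  (Gamma : nat -> seq (seq 'I_nbar)) : seq {mpoly K[n]} :=
  flatten [seq [seq \prod_(i <- t) a i | t <- Gamma s] | s <- iota 1 nbar].

(* Main.v *)
Set Warnings "-notation-overridden,-ambiguous-paths,-notation-incompatible-prefix".
Require Import Defs.
From HB Require Import structures.
From mathcomp Require Import all_boot all_order all_algebra all_field.
From mathcomp Require Import mpoly ring zify.
From Stdlib Require Import Lia.
Set Implicit Arguments. Unset Strict Implicit. Unset Printing Implicit Defensive.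
Import GRing.Theory.
Local Open Scope ring_scope.

Section Ideal.
Variables (K : fieldType) (n : nat).
Notation P := {mpoly K[n]}.
Notation I := (@in_ideal_gen K n).

Lemma I0 (G : seq P) : I G 0.
Proof. by exists [::]; rewrite big1 // => i _; rewrite nth_nil mul0r. Qed.

Lemma ID (G : seq P) p q : I G p -> I G q -> I G (p + q).
Proof.
case=> [c1 ->] [c2 ->]; exists (mkseq (fun j => c1`_j + c2`_j) (size G)).
by rewrite -big_split; apply: eq_bigr => i _; rewrite nth_mkseq // mulrDl.
Qed.

Lemma IM (G : seq P) r p : I G p -> I G (r * p).
Proof.
case=> [c ->]; exists (mkseq (fun j => r * c`_j) (size G)).
by rewrite mulr_sumr; apply: eq_bigr => i _; rewrite nth_mkseq // mulrA.
Qed.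

Lemma Igen (G : seq P) g : g \in G -> I G g.
Proof.
move=> gG; have gi : (index g G < size G)%N by rewrite index_mem.
exists (mkseq (fun j => ((j == index g G)%:R : P)) (size G)).
rewrite (bigD1 (Ordinal gi)) //= big1.
  by rewrite nth_mkseq ?index_mem // eqxx mul1r nth_index // addr0.
move=> i /eqP ne; rewrite nth_mkseq //.
case: eqP => [e|]; last by rewrite mul0r.
by case: ne; apply: val_inj; rewrite /= e.
Qed.

Lemma Isum (G : seq P) m (F : 'I_m -> P) : (forall i, I G (F i)) -> I G (\sum_i F i).
Proof.
move=> H; apply: (big_ind (I G)) => //; [exact: I0 | exact: ID].
Qed.

Lemma IMul (G H : seq P) p q :
  (forall g, g \in G -> I H (g * q)) -> I G p -> I H (p * q).
Proof.
move=> hG [c ->]; rewrite mulr_suml; apply: Isum => i.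
by rewrite -mulrA; apply: IM; apply: hG; apply: mem_nth.
Qed.

Lemma Isub (G H : seq P) p : (forall g, g \in G -> I H g) -> I G p -> I H p.
Proof.
move=> hG hp; rewrite -[p]mulr1; apply: IMul hp => g /hG; by rewrite mulr1.
Qed.

Lemma Ieval (G : seq P) p x : I G p -> (forall g, g \in G -> g.@[x] = 0) -> p.@[x] = 0.
Proof.
case=> [c ->] hG; rewrite (big_morph _ (@mevalD _ _ x) (@meval0 _ _ x)).
by rewrite big1 // => i _; rewrite mevalM [X in _ * X]hG ?mulr0 // mem_nth.
Qed.

End Ideal.

Section Taylor.
Variables (K : fieldType) (n : nat).
Notation P := {mpoly K[n]}.
Notation I := (@in_ideal_gen K n).

Definition Mz (z : {ffun 'I_n -> K}) : seq P := [seq 'X_j - (z j)%:MP | j <- enum 'I_n].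

Lemma taylor (z : {ffun 'I_n -> K}) (p : P) : I (Mz z) (p - (p.@[z])%:MP).
Proof.
pose cong (q : P) := I (Mz z) (q - (q.@[z])%:MP).
have cD q r : cong q -> cong r -> cong (q + r).
  move=> hq hr; rewrite /cong mevalD mpolyCD.
  have -> : q + r - ((q.@[z])%:MP + (r.@[z])%:MP) = (q - (q.@[z])%:MP) + (r - (r.@[z])%:MP) by ring.
  exact: ID.
have cM q r : cong q -> cong r -> cong (q * r).
  move=> hq hr; rewrite /cong mevalM mpolyCM.
  have -> : q * r - (q.@[z])%:MP * (r.@[z])%:MP = q * (r - (r.@[z])%:MP) + (r.@[z])%:MP * (q - (q.@[z])%:MP) by ring.
  by apply: ID; apply: IM.
have cC c : cong c%:MP by rewrite /cong mevalC subrr; apply: I0.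
have cX i : cong 'X_i.
  rewrite /cong mevalXU; apply: Igen; apply/mapP; exists i => //; by rewrite mem_enum.
have c1 : cong 1 by rewrite -mpolyC1.
have cXm m : cong 'X_[m].
  rewrite mpolyXE_id; apply: (big_ind cong) => // i _.
  elim: (m i) => [|k IH]; first by rewrite expr0.
  by rewrite exprS; apply: cM.
rewrite [p]mpolyE; apply: (big_ind cong) => //.
  by rewrite -mpolyC0.
by move=> m _; rewrite -mul_mpolyC; apply: cM.
Qed.

Lemma taylor0 (z : {ffun 'I_n -> K}) (p : P) : p.@[z] = 0 -> I (Mz z) p.
Proof. by move=> h; have := taylor z p; rewrite h mpolyC0 subr0. Qed.

End Taylor.

Section Core.
Variables (K : fieldType) (n : nat).
Notation P := {mpoly K[n]}.
Notation I := (@in_ideal_gen K n).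
Notation pt := {ffun 'I_n -> K}.

Fixpoint choices (m : nat) : seq (seq 'I_n) :=
  if m is m'.+1 then [seq j :: c | j <- enum 'I_n, c <- choices m'] else [:: [::]].

Definition pt0 : pt := [ffun => 0].

Fixpoint gen (F : seq pt) (k : nat) (c : seq 'I_n) : P :=
  match c with
  | [::] => 1
  | j :: c' => ('X_j - ((nth pt0 F k) j)%:MP) * gen F k.+1 c'
  end.

Definition gens F := [seq gen F 0 c | c <- choices (size F)].

Lemma gen_shift (z : pt) F k c : gen (z :: F) k.+1 c = gen F k c.
Proof. by elim: c k => //= j c IH k; rewrite IH. Qed.

Lemma gens_consE g (z : pt) F : g \in gens (z :: F) ->
  exists j, exists2 g', g' \in gens F & g = ('X_j - (z j)%:MP) * g'.
Proof.
case/mapP => c /allpairsP [[j c'] /= [_ hc' ->]] ->.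
exists j; exists (gen F 0 c'); first by apply: map_f.
by rewrite /= gen_shift.
Qed.

Lemma gens_consI j g (z : pt) F : g \in gens F -> ('X_j - (z j)%:MP) * g \in gens (z :: F).
Proof.
case/mapP => c hc ->; apply/mapP; exists (j :: c).
  by apply/allpairsP; exists (j, c); rewrite /= mem_enum.
by rewrite /= gen_shift.
Qed.

Lemma gens_van F g (x : pt) : g \in gens F -> x \in F -> g.@[x] = 0.
Proof.
elim: F g => [|z F IH] g //.
case/gens_consE => j [g' hg' ->]; rewrite in_cons mevalM.
case/orP => [/eqP ->|hx]; last by rewrite (IH _ hg' hx) mulr0.
by rewrite mevalB mevalXU mevalC subrr mul0r.
Qed.

Lemma Lmul F (z : pt) j q : I (gens F) q -> I (gens (z :: F)) (('X_j - (z j)%:MP) * q).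
Proof.
move=> hq; rewrite mulrC; apply: IMul hq => g hg; rewrite mulrC.
by apply: Igen; apply: gens_consI.
Qed.

Lemma sep F (z : pt) : z \notin F -> exists u, I (gens F) u /\ u.@[z] = 1.
Proof.
elim: F => [|z' F IH].
  move=> _; exists 1; split; last by rewrite meval1.
  by apply: Igen; rewrite /gens /= mem_head.
rewrite in_cons negb_or => /andP [nz /IH [u' [hu' eu']]].
have [j hj] : exists j, z j != z' j.
  case: (pickP (fun j => z j != z' j)) => [j hj|h]; first by exists j.
  by case/eqP: nz; apply/ffunP => j; move/negbFE/eqP: (h j).
exists (((z j - z' j)^-1)%:MP * (('X_j - (z' j)%:MP) * u')); split.
  by apply: IM; apply: Lmul.
rewrite !mevalM mevalC mevalB mevalXU mevalC eu' mulr1 mulVf //.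
by rewrite subr_eq0.
Qed.

Lemma core F : uniq F -> forall p : P,
  all (fun x : pt => p.@[x] == 0) F <-> I (gens F) p.
Proof.
move=> uF p; split; last first.
  move=> h; apply/allP => x hx; apply/eqP; apply: Ieval h _ => g hg.
  exact: gens_van hg hx.
elim: F uF p => [|z F IH] uF p.
  move=> _; rewrite -[p]mulr1; apply: IM; apply: Igen.
  by rewrite /gens /= mem_head.
case/andP: uF => zF uF; case/andP => /eqP pz hF.
have hp := IH uF p hF.
have [u [hu eu]] := sep zF.
have -> : p = p * u + (1 - u) * p by ring.
apply: ID.
  apply: IMul (taylor0 pz) => g /mapP [j _ ->]; exact: Lmul.
have e1 : (1 - u).@[z] = 0 by rewrite mevalB meval1 eu subrr.
apply: IMul (taylor0 e1) => g /mapP [j _ ->]; exact: Lmul.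
Qed.

End Core.

Section Final.
Variables (K : fieldType) (n : nat) (F : seq {ffun 'I_n -> K}).
Notation P := {mpoly K[n]}.
Local Notation m := (size F).
Local Notation N := (m * n + m + n)%N.

Definition cc (i : 'I_N.+1) (j : 'I_n) : K :=
  if ((i < m * n)%N && (i %% n == j)%N) then 1 else 0.
Definition c0 (i : 'I_N.+1) : K :=
  if (i < m * n)%N then - \sum_(j < n) (if (i %% n == j)%N then (nth (pt0 K n) F (i %/ n)) j else 0)
  else 1.
Definition aa (i : 'I_N.+1) : P := (c0 i)%:MP + \sum_(j < n) cc i j *: 'X_j.

Lemma aa_val (i : 'I_N.+1) k (j : 'I_n) : val i = (k * n + j)%N -> (k < m)%N ->
  aa i = 'X_j - ((nth (pt0 K n) F k) j)%:MP.
Proof.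
move=> hi hk.
have jn := ltn_ord j.
have lt : (i < m * n)%N by rewrite hi; nia.
have md : (i %% n = j)%N by rewrite hi modnMDl modn_small.
have dv : (i %/ n = k)%N by rewrite hi divnMDl ?divn_small ?addn0 //; lia.
rewrite /aa /c0 /cc lt md dv /=.
rewrite (bigD1 j) //= big1 => [|j' nj']; last first.
  by case: eqP => // e; case/eqP: nj'; apply: val_inj.
rewrite (bigD1 j) //= big1 => [|j' nj']; last first.
  by case: eqP => [e|]; [case/eqP: nj'; apply: val_inj | rewrite scale0r].
by rewrite eqxx !addr0 scale1r mpolyCN addrC.
Qed.

Lemma aa_N : aa (inord N) = 1.
Proof.
rewrite /aa /c0 /cc inordK // ifN; last by rewrite -leqNgt; lia.
rewrite big1 ?addr0 ?mpolyC1 // => j _.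
by rewrite ifN ?scale0r // negb_and -leqNgt; apply/orP; left; lia.
Qed.

Fixpoint tup (k : nat) (c : seq 'I_n) : seq nat :=
  if c is j :: c' then (k * n + j)%N :: tup k.+1 c' else [::].

Lemma prod_tup c k : (k + size c <= m)%N ->
  \prod_(x <- tup k c) aa (inord x) = gen F k c.
Proof.
elim: c k => [|j c IH] k /=; first by rewrite big_nil.
move=> hk; rewrite big_cons IH; last by rewrite addSnnS.
have jn := ltn_ord j.
rewrite (@aa_val _ k j) //; [apply: inordK; nia | lia].
Qed.

Lemma path_tup c k x : (k + size c <= m)%N -> (x < k * n)%N ->
  path ltn x (rcons (tup k c) N) && all (fun y => y <= N)%N (rcons (tup k c) N).
Proof.
elim: c k x => [|j c IH] k x /= hk hx.
  by rewrite leqnn !andbT; nia.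
have jn := ltn_ord j.
have := IH k.+1 (k * n + j)%N; rewrite addSnnS => /(_ hk) h.
have /andP [-> ->] : path ltn (k * n + j)%N (rcons (tup k.+1 c) N) &&
    all (fun y => y <= N)%N (rcons (tup k.+1 c) N) by apply: h; nia.
by rewrite !andbT; apply/andP; split; nia.
Qed.

Definition tt (c : seq 'I_n) : seq 'I_N.+1 := map (@inord N) (rcons (tup 0 c) N).

Definition Gam (s : nat) : seq (seq 'I_N.+1) :=
  if s == m.+1 then [seq tt c | c <- choices n m] else [::].

Lemma size_choices k c : c \in choices n k -> size c = k.
Proof.
elim: k c => [|k IH] c /=; first by rewrite inE => /eqP ->.
by case/allpairsP => [[j c'] /= [_ hc ->]] /=; rewrite (IH _ hc).
Qed.

Lemma size_tup k c : size (tup k c) = size c.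
Proof. by elim: c k => //= j c IH k; rewrite IH. Qed.

Lemma Gam_incr s t : (1 <= s <= N.+1)%N -> t \in Gam s -> incr_tuple s t.
Proof.
rewrite /Gam; case: eqP => // -> _ /mapP [c hc ->].
have sc := size_choices hc.
rewrite /incr_tuple /tt size_map size_rcons size_tup sc eqxx /=.
have /andP [hp ha] : sorted ltn (rcons (tup 0 c) N) && all (fun y => y <= N)%N (rcons (tup 0 c) N).
  case: c sc {hc} => [|j c] sc.
    by rewrite /= leqnn; apply/andP; split => //; lia.
  have jn := ltn_ord j.
  have h1c : (1 + size c <= m)%N by rewrite -sc.
  have h0 : (0 * n + j < 1 * n)%N by nia.
  have /andP [h1 h2] := @path_tup c 1 (0 * n + j)%N h1c h0.
  rewrite /= h1 h2 ?andbT /=; nia.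
apply: (@homo_sorted_in _ _ (fun y => (y <= N)%N) _ ltn) => //.
move=> x y hx hy lt; change (nat_of_ord (@inord N x) < nat_of_ord (@inord N y))%N; rewrite !inordK // ltnS.
Qed.

End Final.

Lemma prod_gens_mem (K : fieldType) n (F : seq {ffun 'I_n -> K}) g :
  g \in prod_gens (@aa K n F) (@Gam K n F) <-> g \in gens F.
Proof.
split.
  case/flattenP => l /mapP [s hs ->] /mapP [t ht ->].
  move: ht; rewrite /Gam; case: eqP => [es|] // /mapP [c hc ->].
  rewrite /tt big_map -cats1 big_cat big_seq1 aa_N Monoid.mulm1 prod_tup; last by rewrite (size_choices hc).
  exact: map_f.
case/mapP => c hc ->; apply/flattenP.
exists [seq \prod_(i <- t) @aa K n F i | t <- @Gam K n F (size F).+1].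
  apply/mapP; exists (size F).+1 => //; rewrite mem_iota; apply/andP; split => //; lia.
apply/mapP; exists (@tt K n F c); first by rewrite /Gam eqxx; apply: map_f.
rewrite /tt big_map -cats1 big_cat big_seq1 aa_N Monoid.mulm1 prod_tup //.
by rewrite (size_choices hc).
Qed.

Theorem lemma4 (K : fieldExtType rat) (n : nat) (Z : seq ('I_n -> K)) :
  exists (nbar : nat) (a : 'I_nbar -> {mpoly K[n]})
         (Gamma : nat -> seq (seq 'I_nbar)),
    [/\ (n < nbar)%N,
        (forall i, affine_linear (a i)),
        (forall s t, (1 <= s <= nbar)%N -> t \in Gamma s -> incr_tuple s t) &
        (forall p : {mpoly K[n]},
            vanishes_on Z p <-> in_ideal_gen (prod_gens a Gamma) p)].
Proof.
pose F := undup [seq [ffun i => z i] | z <- Z].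
exists (size F * n + size F + n).+1, (@aa K n F), (@Gam K n F); split.
- lia.
- by move=> i; exists (@c0 K n F i), (@cc K n F i).
- exact: Gam_incr.
move=> p.
have -> : vanishes_on Z p <-> all (fun x : {ffun 'I_n -> K} => p.@[x] == 0) F.
  rewrite /vanishes_on /F all_undup all_map.
  have e : preim (fun z : 'I_n -> K => [ffun i => z i]) (fun x : {ffun 'I_n -> K} => p.@[x] == 0) =1 (fun z => p.@[z] == 0).
    by move=> z /=; rewrite (@meval_eq _ _ _ z) // => i; rewrite ffunE.
  by rewrite (eq_all e).
rewrite core ?undup_uniq //.
split; apply: Isub => g hg; apply: Igen; apply/prod_gens_mem => //.
Qed.
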